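(* Let $\mathcal{H}$ and $\mathcal{K}$ be finite-dimensional complex Hilbert spaces and let $\Psi: B(\mathcal{H})\to B(\mathcal{K})$ be a Hermitian-preserving trace-preserving linear map. Then the following are equivalent: (1) $\Psi$ is semi-positive, i.e. there exists an invertible density matrix $\rho\in B(\mathcal{H})$ such that $\Psi(\rho)$ is an invertible density matrix; (2) there exists a positive semidefinite $\rho\in B(\mathcal{H})$ such that $\Psi(\rho)$ is positive definite.
   Context: $B(\mathcal{H})$ denotes all linear operators on $\mathcal{H}$; a density matrix is a positive semidefinite operator of trace one. A map is Hermitian-preserving if $\Psi(X^\dagger)=\Psi(X)^\dagger$ and trace-preserving if $\operatorname{Tr}\Psi(X)=\operatorname{Tr}X$. *)

(* Defs.v *)
From HB Require Import structures.
From mathcomp Require Import all_boot all_order all_algebra.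
From mathcomp Require Import sesquilinear spectral.
Set Implicit Arguments. Unset Strict Implicit. Unset Printing Implicit Defensive.
Import Order.TTheory GRing.Theory Num.Theory.
Local Open Scope ring_scope.
Local Open Scope sesquilinear_scope.

(* Matrices over C : numClosedFieldType (e.g. the complex numbers);
   B(C^n) is 'M[C]_n, with adjoint A^t* = conjugate transpose. *)

Definition adjmx (C : numClosedFieldType) (n m : nat) (A : 'M[C]_(n, m)) : 'M[C]_(m, n) :=
  A ^t*.

Definition psdmx (C : numClosedFieldType) (n : nat) (A : 'M[C]_n) : Prop :=
  adjmx A = A /\ forall u : 'rV[C]_n, 0 <= (u *m A *m adjmx u) 0 0.

Definition pdmx (C : numClosedFieldType) (n : nat) (A : 'M[C]_n) : Prop :=
  adjmx A = A /\ forall u : 'rV[C]_n, u != 0 -> 0 < (u *m A *m adjmx u) 0 0.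

Definition densitymx (C : numClosedFieldType) (n : nat) (A : 'M[C]_n) : Prop :=
  psdmx A /\ \tr A = 1.

Definition hermitian_preserving (C : numClosedFieldType) (n m : nat)
  (Psi : 'M[C]_n -> 'M[C]_m) : Prop :=
  forall X, Psi (adjmx X) = adjmx (Psi X).

Definition trace_preserving (C : numClosedFieldType) (n m : nat)
  (Psi : 'M[C]_n -> 'M[C]_m) : Prop :=
  forall X, \tr (Psi X) = \tr X.

Definition semi_positive (C : numClosedFieldType) (n m : nat)
  (Psi : 'M[C]_n -> 'M[C]_m) : Prop :=
  exists rho : 'M[C]_n, [/\ densitymx rho, rho \in unitmx,
                            densitymx (Psi rho) & Psi rho \in unitmx].

(* Main.v *)
Require Import Defs.
From HB Require Import structures.
From mathcomp Require Import all_boot all_order all_algebra.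
From mathcomp Require Import sesquilinear spectral.
Import Order.TTheory GRing.Theory Num.Theory Num.Def.
Local Open Scope ring_scope.
Local Open Scope sesquilinear_scope.

Lemma adjmxM (C : numClosedFieldType) m n p (A : 'M[C]_(m, n)) (B : 'M[C]_(n, p)) :
  (A *m B)^t* = B^t* *m A^t*.
Proof. by rewrite trmx_mul map_mxM. Qed.

Lemma diag_form (C : numClosedFieldType) n (v : 'rV[C]_n) (s : 'rV[C]_n) :
  (v *m diag_mx s *m v^t*) 0 0 = \sum_i s 0 i * (v 0 i * (v 0 i)^*).
Proof.
rewrite mul_mx_diag !mxE; apply: eq_bigr => i _; rewrite !mxE.
by rewrite mulrCA mulrA.
Qed.

Lemma herm_normal (C : numClosedFieldType) n (A : 'M[C]_n) :
  A^t* = A -> A \is normalmx.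
Proof. by move=> h; apply/normalmxP; rewrite h. Qed.

Lemma spec_eq (C : numClosedFieldType) n (A : 'M[C]_n) : A^t* = A ->
  A = (spectralmx A)^t* *m diag_mx (spectral_diag A) *m spectralmx A.
Proof.
move=> h; have /orthomx_spectralP E := herm_normal _ _ _ h.
  by rewrite {1}E invmx_unitary ?spectral_unitarymx.

Qed.

Lemma unitK (C : numClosedFieldType) n (P : 'M[C]_n) : P \is unitarymx ->
  P^t* *m P = 1%:M.
Proof. by move=> u; rewrite -invmx_unitary // mulVmx // unitarymx_unit. Qed.

Lemma unitK' (C : numClosedFieldType) n (P : 'M[C]_n) : P \is unitarymx ->
  P *m P^t* = 1%:M.
Proof. by move/unitarymxP. Qed.

Lemma herm_form (C : numClosedFieldType) n (A : 'M[C]_n) (u : 'rV[C]_n) :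
  A^t* = A ->
  (u *m A *m u^t*) 0 0 = \sum_i spectral_diag A 0 i *
     ((u *m (spectralmx A)^t*) 0 i * ((u *m (spectralmx A)^t*) 0 i)^*).
Proof.
move=> h; rewrite -diag_form {1}(spec_eq _ _ _ h) adjmxM trmxCK !mulmxA.
done.
Qed.

Lemma norm_pres (C : numClosedFieldType) n (P : 'M[C]_n) (u : 'rV[C]_n) :
  P \is unitarymx ->
  \sum_i ((u *m P^t*) 0 i * ((u *m P^t*) 0 i)^*) = (u *m u^t*) 0 0.
Proof.
move=> uP; rewrite -dotmxE.
have -> : dotmx u u = ((u *m P^t*) *m diag_mx (const_mx 1) *m (u *m P^t*)^t*) 0 0.
  rewrite diag_const_mx mulmx1 adjmxM trmxCK mulmxA -(mulmxA u) unitK // mulmx1.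
  by rewrite dotmxE.
rewrite diag_form; apply: eq_bigr => i _. rewrite !mxE. exact: (esym (mul1r _)).
Qed.

Lemma delta_ne0 (C : numClosedFieldType) n (i : 'I_n) : (delta_mx 0 i : 'rV[C]_n) != 0.
Proof.
apply/eqP => /matrixP /(_ 0 i); rewrite !mxE !eqxx /= => /eqP.
by rewrite oner_eq0.
Qed.

Lemma unit_row_ne0 (C : numClosedFieldType) n (P : 'M[C]_n) (u : 'rV[C]_n) :
  P \is unitarymx -> u != 0 -> u *m P != 0.
Proof.
move=> uP u0; rewrite mulmx_free_eq0 // row_free_unit unitarymx_unit //.
Qed.

Lemma unit_row_ne0' (C : numClosedFieldType) n (P : 'M[C]_n) (u : 'rV[C]_n) :
  P \is unitarymx -> u != 0 -> u *m P^t* != 0.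
Proof. by move=> uP; apply: unit_row_ne0; rewrite trmxC_unitary. Qed.

Lemma eigen_form (C : numClosedFieldType) n (A : 'M[C]_n) (i : 'I_n) :
  A^t* = A ->
  spectral_diag A 0 i = (((delta_mx 0 i : 'rV[C]_n) *m spectralmx A) *m A
                          *m ((delta_mx 0 i : 'rV[C]_n) *m spectralmx A)^t*) 0 0.
Proof.
move=> h; rewrite herm_form // -mulmxA unitK' ?spectral_unitarymx // mulmx1.
rewrite (bigD1 i) //= big1 ?addr0 => [|j ji]; rewrite !mxE ?eqxx /=.
  by rewrite conjC1 !mulr1.
by rewrite (negbTE ji) /= mul0r mulr0.
Qed.

Lemma quad_real (C : numClosedFieldType) n (A : 'M[C]_n) (u : 'rV[C]_n) :
  A^t* = A -> (u *m A *m u^t*) 0 0 \is Num.real.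
Proof.
move=> h; apply/CrealP.
have -> : conjC ((u *m A *m u^t*) 0 0) = ((u *m A *m u^t*)^t*) 0 0 by rewrite !mxE.
by rewrite !adjmxM trmxCK h mulmxA.
Qed.

Lemma pos_sum (C : numClosedFieldType) n (c : 'I_n -> C) (v : 'rV[C]_n) :
  (forall i, 0 < c i) -> v != 0 -> 0 < \sum_i c i * (v 0 i * (v 0 i)^*).
Proof.
move=> cp v0.
suff /existsP[i vi] : [exists i, v 0 i != 0].
  rewrite (bigD1 i) //= ltr_wpDr //.
    by apply: sumr_ge0 => j _; apply: mulr_ge0; [exact: ltW (cp j) | exact: mul_conjC_ge0].
  by apply: mulr_gt0; [exact: cp | rewrite mul_conjC_gt0].
apply: contraNT v0; rewrite negb_exists => /forallP uNN0.
apply/eqP/rowP=> j; rewrite mxE; apply/eqP; rewrite -[_ == _]negbK.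
by rewrite uNN0.
Qed.

Lemma psd_eig (C : numClosedFieldType) n (A : 'M[C]_n) i :
  psdmx A -> 0 <= spectral_diag A 0 i.
Proof. by case=> h q; rewrite eigen_form //; apply: q. Qed.

Lemma pd_eig (C : numClosedFieldType) n (A : 'M[C]_n) i :
  pdmx A -> 0 < spectral_diag A 0 i.
Proof.
case=> h q; rewrite eigen_form //; apply: q.
by apply: unit_row_ne0; [exact: spectral_unitarymx | exact: delta_ne0].
Qed.

Lemma pd_of_eig (C : numClosedFieldType) n (A : 'M[C]_n) :
  A^t* = A -> (forall i, 0 < spectral_diag A 0 i) -> pdmx A.
Proof.
move=> h p; split => // u u0; rewrite /adjmx herm_form //.
by apply: pos_sum => //; apply: unit_row_ne0' => //; exact: spectral_unitarymx.
Qed.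

Lemma eig_row (C : numClosedFieldType) n (A : 'M[C]_n) i : A^t* = A ->
  ((delta_mx 0 i : 'rV[C]_n) *m spectralmx A) *m A =
   spectral_diag A 0 i *: ((delta_mx 0 i : 'rV[C]_n) *m spectralmx A).
Proof.
move=> h; rewrite {2}(spec_eq _ _ _ h) !mulmxA -(mulmxA _ (spectralmx A)).
rewrite unitK' ?spectral_unitarymx // mulmx1 scalemxAl; congr (_ *m _).
apply/matrixP => a b; rewrite mul_mx_diag !mxE.
rewrite (ord1 a) eqxx /=; case: (eqVneq b i) => [->|]; by rewrite ?mulr1 ?mulr0 ?mul1r ?mul0r.
Qed.

Lemma psd_unit_pd (C : numClosedFieldType) n (A : 'M[C]_n) :
  psdmx A -> A \in unitmx -> pdmx A.
Proof.
move=> p u; have [h _] := p; apply: pd_of_eig => // i.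
rewrite lt_def psd_eig // andbT; apply/eqP => s0.
have := eig_row _ _ A i h; rewrite s0 scale0r => /eqP.
rewrite mulmx_free_eq0 ?row_free_unit // mulmx_free_eq0 ?row_free_unit ?spectral_unit //.
by rewrite (negbTE (delta_ne0 _ _ _)).
Qed.

Lemma pd_unit (C : numClosedFieldType) n (A : 'M[C]_n) : pdmx A -> A \in unitmx.
Proof.
case=> h q; rewrite -row_free_unit; apply: inj_row_free => v vA.
apply/eqP/negPn/negP => v0; have := q v v0.
by rewrite vA mul0mx mxE ltxx.
Qed.

Lemma pd_psd (C : numClosedFieldType) n (A : 'M[C]_n) : pdmx A -> psdmx A.
Proof.
case=> h q; split => // u; have [->|u0] := eqVneq u 0.
  by rewrite !mul0mx mxE.
exact/ltW/q.
Qed.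

Lemma adj_scale (C : numClosedFieldType) n (A : 'M[C]_n) c :
  c \is Num.real -> A^t* = A -> (c *: A)^t* = c *: A.
Proof.
move=> cr h; apply/matrixP => i j; have := congr1 (fun M : 'M[C]_n => M i j) h.
by rewrite !mxE /= => <-; rewrite rmorphM /= conj_Creal.
Qed.

Lemma adj_add (C : numClosedFieldType) n (A B : 'M[C]_n) :
  A^t* = A -> B^t* = B -> (A + B)^t* = A + B.
Proof.
move=> h h'; apply/matrixP => i j.
have := congr1 (fun M : 'M[C]_n => M i j) h.
have := congr1 (fun M : 'M[C]_n => M i j) h'.
by rewrite !mxE /= => <- <-; rewrite rmorphD.
Qed.

Lemma quadD (C : numClosedFieldType) n (A B : 'M[C]_n) (u : 'rV[C]_n) :
  (u *m (A + B) *m u^t*) 0 0 = (u *m A *m u^t*) 0 0 + (u *m B *m u^t*) 0 0.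
Proof. by rewrite mulmxDr mulmxDl mxE. Qed.

Lemma quadZ (C : numClosedFieldType) n (A : 'M[C]_n) c (u : 'rV[C]_n) :
  (u *m (c *: A) *m u^t*) 0 0 = c * (u *m A *m u^t*) 0 0.
Proof. by rewrite -scalemxAr -scalemxAl mxE. Qed.

Lemma pd_scale (C : numClosedFieldType) n (A : 'M[C]_n) c :
  0 < c -> pdmx A -> pdmx (c *: A).
Proof.
move=> c0 [h q]; split; first exact: adj_scale (gtr0_real c0) h.
by move=> u u0; rewrite /adjmx quadZ mulr_gt0 // q.
Qed.

Lemma pd_add (C : numClosedFieldType) n (A B : 'M[C]_n) :
  psdmx A -> pdmx B -> pdmx (A + B).
Proof.
move=> [h q] [h' q']; split; first exact: adj_add.
by move=> u u0; rewrite /adjmx quadD ltr_wpDl // ?q ?q'.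
Qed.

Lemma pd1 (C : numClosedFieldType) n : pdmx (1%:M : 'M[C]_n).
Proof.
split; first by rewrite /adjmx trmx1 map_mx1.
by move=> u u0; rewrite /adjmx mulmx1 -dotmxE dotmx_is_dotmx.
Qed.

Lemma adj_delta (C : numClosedFieldType) n (i : 'I_n) :
  (delta_mx 0 i : 'rV[C]_n)^t* = delta_mx i 0.
Proof. by apply/matrixP => a b; rewrite !mxE conjC_nat andbC. Qed.

Lemma pd_tr (C : numClosedFieldType) n (A : 'M[C]_n.+1) : pdmx A -> 0 < \tr A.
Proof.
move=> pA; have [h q] := pA; have [_ q'] := pd_psd _ _ _ pA.
rewrite /mxtrace (bigD1 ord0) //= ltr_pwDl //.
  have := q (delta_mx 0 ord0) (delta_ne0 _ _ _).
  by rewrite /adjmx adj_delta -rowE -colE !mxE.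
apply: sumr_ge0 => i _; have := q' (delta_mx 0 i).
by rewrite /adjmx adj_delta -rowE -colE !mxE.
Qed.

Lemma le_sum_term (C : numClosedFieldType) n (f : 'I_n -> C) i :
  (forall j, 0 <= f j) -> f i <= \sum_j f j.
Proof.
move=> f0; rewrite (bigD1 i) //= lerDl; apply: sumr_ge0 => j _; exact: f0.
Qed.

Lemma pd_pert (C : numClosedFieldType) n (A B : 'M[C]_n.+1) :
  pdmx A -> B^t* = B -> exists e, 0 < e /\ pdmx (A + e *: B).
Proof.
move=> pA hB; have [hA qA] := pA.
set a := spectral_diag A; set b := spectral_diag B.
set beta := \sum_i `|b 0 i|; set gam := \sum_i (a 0 i)^-1.
have ap : forall i, 0 < a 0 i by move=> i; exact: pd_eig.
have beta0 : 0 <= beta by apply: sumr_ge0 => i _.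
have gam_ge : forall i, (a 0 i)^-1 <= gam.
  by move=> i; apply: le_sum_term => j; rewrite invr_ge0 ltW.
have gam0 : 0 < gam by apply: lt_le_trans (gam_ge ord0); rewrite invr_gt0.
have breal : forall i, b 0 i \is Num.real.
  by move=> i; rewrite /b eigen_form //; apply: quad_real.
have bge : forall i, - beta <= b 0 i.
  by move=> i; apply: real_lerNnormlW => //; apply: le_sum_term => j.
set e := ((beta + 1) * gam)^-1.
have e0 : 0 < e by rewrite invr_gt0 mulr_gt0 // ltr_wpDl.
have eb : forall i, e * beta < a 0 i.
  move=> i; apply: lt_le_trans (_ : gam^-1 <= a 0 i).
    rewrite /e invfM mulrAC [_^-1 * beta]mulrC -[X in _ < X]mul1r ltr_pM2r ?invr_gt0 //.
    by rewrite ltr_pdivrMr ?ltr_wpDl // mul1r ltrDl.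
  rewrite -[a 0 i]invrK lef_pV2 ?gam_ge // posrE ?invr_gt0 //.
exists e; split => //; split.
  by apply: adj_add => //; apply: adj_scale => //; exact: gtr0_real.
move=> u u0; rewrite /adjmx quadD quadZ.
set N := (u *m u^t*) 0 0.
have qB : - beta * N <= (u *m B *m u^t*) 0 0.
  rewrite herm_form // /N -(norm_pres _ _ (spectralmx B) u) ?spectral_unitarymx //.
  rewrite mulr_sumr; apply: ler_sum => i _; apply: ler_wpM2r => //.
  exact: mul_conjC_ge0.
apply: lt_le_trans (_ : (u *m A *m u^t*) 0 0 + e * (- beta * N) <= _).
  rewrite herm_form // /N -(norm_pres _ _ (spectralmx A) u) ?spectral_unitarymx //.
  rewrite mulr_sumr mulr_sumr -big_split /=.
  rewrite (eq_bigr (fun i => (a 0 i - e * beta) *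
       ((u *m (spectralmx A)^t*) 0 i * ((u *m (spectralmx A)^t*) 0 i)^*))).
    apply: pos_sum => [i|]; first by rewrite subr_gt0.
    by apply: unit_row_ne0' => //; exact: spectral_unitarymx.
  by move=> i _; rewrite /a mulrBl !mulrA mulrN !mulNr.
by rewrite lerD2l ler_wpM2l // ltW.
Qed.

Theorem mainTheorem10 (C : numClosedFieldType) (n m : nat)
  (Psi : {linear 'M[C]_n.+1 -> 'M[C]_m.+1}) :
  hermitian_preserving Psi -> trace_preserving Psi ->
  (semi_positive Psi <->
   exists rho : 'M[C]_n.+1, psdmx rho /\ pdmx (Psi rho)).
Proof.
move=> hp tp; split.
  case=> rho [[pr _] ur [pP _] uP]; exists rho; split => //.
  exact: psd_unit_pd.
case=> rho [pr pP].
have hB : adjmx (Psi 1%:M) = Psi 1%:M.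
  by rewrite -hp /adjmx trmx1 map_mx1.
have [e [e0 pe]] := pd_pert _ _ _ _ pP hB.
set R := rho + e *: 1%:M.
have PR : Psi R = Psi rho + e *: Psi 1%:M by rewrite /R linearD linearZ.
have pR : pdmx R by apply: pd_add => //; apply: pd_scale => //; exact: pd1.
have pPR : pdmx (Psi R) by rewrite PR.
set t := \tr (Psi R).
have t0 : 0 < t by exact: pd_tr.
have tR : \tr R = t by rewrite /t tp.
exists (t^-1 *: R); split.
- split; first by apply/pd_psd/pd_scale; rewrite ?invr_gt0.
  by rewrite mxtraceZ tR mulVf // gt_eqF.
- by apply/pd_unit/pd_scale; rewrite ?invr_gt0.
- rewrite linearZ /=; split; first by apply/pd_psd/pd_scale; rewrite ?invr_gt0.
  by rewrite mxtraceZ -/t mulVf // gt_eqF.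
- by rewrite linearZ /=; apply/pd_unit/pd_scale; rewrite ?invr_gt0.
Qed.
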